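(* Let $d\ge2$ and $R,S\subset\mathbb{Z}_d$. Then $\mathrm{ZMF}^{\mathrm{gr}}_{\mathrm{bi}}(\hat P_R,\hat P_S)=\mathbb{C}\,1$ if $R=S$, and $\mathrm{ZMF}^{\mathrm{gr}}_{\mathrm{bi}}(\hat P_R,\hat P_S)=0$ otherwise.
   Context: Let $\eta=e^{2\pi i/d}$. Graded matrix bifactorisations of $x^d$: $\mathbb{Z}_2$-graded free $\mathbb{C}[x,y]$-modules $M$ with a $\mathbb{C}$-grading compatible with the module structure, where $x,y$ have $\mathbb{C}$-degree $2/d$, and an odd $\mathbb{C}[x,y]$-linear $d^M$ of $\mathbb{C}$-degree $1$ with $d^M\circ d^M=(x^d-y^d)1_M$. $\mathrm{ZMF}^{\mathrm{gr}}_{\mathrm{bi}}(M,N)$ is the space of even $\mathbb{C}[x,y]$-linear maps $f:M\to N$ of $\mathbb{C}$-degree $0$ with $d^Nf=fd^M$. For $S\subset\mathbb{Z}_d$ and $\alpha\in\mathbb{C}$, $P_S\{\alpha\}$ has even part $\mathbb{C}[x,y]$ with $1$ in degree $\alpha$, odd part $\mathbb{C}[x,y]$ with $1$ in degree $\alpha+\frac2d|S|-1$, $d_1=\prod_{j\in S}(x-\eta^jy)$ (odd to even), $d_0=\prod_{j\notin S}(x-\eta^jy)$ (even to odd). $\hat P_S:=P_S\{\frac{1-|S|}{d}\}$. *)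

(* Defs.v *)
From HB Require Import structures.
From Stdlib Require Import Reals.
From mathcomp Require Import all_boot all_order all_algebra.
From mathcomp Require Import Rstruct complex.
Set Implicit Arguments. Unset Strict Implicit. Unset Printing Implicit Defensive.
Import Order.TTheory GRing.Theory Num.Theory.
Local Open Scope ring_scope.

Definition CC : Type := (Rdefinitions.R)[i].

Definition eta (d : nat) : CC :=
  Complex (cos (2 * PI / INR d))%R (sin (2 * PI / INR d))%R.

(* Bivariate polynomials C[x,y] are represented as {poly {poly C}}:
   the outer variable is x, the inner variable is y.  The coefficient of
   x^i y^j in p is  p`_i`_j. *)
Definition bipoly := {poly {poly CC}}.
Definition varx : bipoly := 'X.
Definition vary : bipoly := ('X)%:P.

(* A homogeneous (w.r.t. the C-grading, deg x = deg y = 2/d) bivariate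
   polynomial of C-degree a : every monomial x^i y^j occurring in p has degree
   (i+j)*2/d = a.  (The zero polynomial is homogeneous of every degree.) *)
Definition homog_deg (d : nat) (a : CC) (p : bipoly) : Prop :=
  forall i j : nat, p`_i`_j != 0 -> (i + j)%:R * (2 / d%:R) = a.

(* A graded matrix bifactorisation of rank (1|1): even part C[x,y] with
   generator 1 in C-degree deg0, odd part C[x,y] with generator 1 in C-degree
   deg1, differential given by d1 : odd -> even and d0 : even -> odd. *)
Record mf11 := MF11 {
  deg0 : CC; deg1 : CC; dif1 : bipoly; dif0 : bipoly }.

Definition P_shift (d : nat) (S : {set 'I_d}) (alpha : CC) : mf11 :=
  MF11 alpha (alpha + (2 / d%:R) * #|S|%:R - 1)
       (\prod_(j in S) (varx - ((eta d) ^+ j)%:P%:P * vary))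
       (\prod_(j in ~: S) (varx - ((eta d) ^+ j)%:P%:P * vary)).

Definition Phat (d : nat) (S : {set 'I_d}) : mf11 :=
  P_shift S ((1 - #|S|%:R) / d%:R).

(* An even C[x,y]-linear map
   f : M -> N is determined by the images of the generators:
   f(1_even) = f0 * 1_even, f(1_odd) = f1 * 1_odd, i.e. by the pair (f0, f1).
   It has C-degree 0 iff f0, f1 are homogeneous of the appropriate degrees,
   and d^N f = f d^M amounts to  d1^N f1 = f0 d1^M  and  d0^N f0 = f1 d0^M. *)
Definition ZMF (d : nat) (M N : mf11) (f : bipoly * bipoly) : Prop :=
  [/\ homog_deg d (deg0 M - deg0 N) f.1,
      homog_deg d (deg1 M - deg1 N) f.2,
      dif1 N * f.2 = f.1 * dif1 M &
      dif0 N * f.1 = f.2 * dif0 M].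

(* Main.v *)
Require Import Defs.
From HB Require Import structures.
From Stdlib Require Import Reals Lra Lia.
From mathcomp Require Import all_boot all_order all_algebra.
From mathcomp Require Import Rstruct complex ring.
Import GRing.Theory Num.Theory.
Local Open Scope ring_scope.

Lemma eta_pow (d m : nat) : (Defs.eta d ^+ m : CC) =
  Complex (cos (INR m * (2 * PI / INR d))) (sin (INR m * (2 * PI / INR d))).
Proof.
elim: m => [|m IH].
  by rewrite expr0 /= Rmult_0_l cos_0 sin_0.
rewrite exprS IH /Defs.eta S_INR.
rewrite /GRing.mul /=.
rewrite Rmult_plus_distr_r Rmult_1_l cos_plus sin_plus.
congr Complex; rewrite ?RplusE ?RminusE ?RmultE; ring.
Qed.

Lemma eta_neq0 d : Defs.eta d != 0.
Proof.
apply/eqP => H.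
have h1 := congr1 (fun z => complex.Re z) H; have h2 := congr1 (fun z => complex.Im z) H.
simpl in h1, h2.
have := sin2_cos2 (2 * PI / INR d).
rewrite h1 h2 /Rsqr. rewrite /GRing.zero /=. move=> h. lra.
Qed.

Section S1.
Local Open Scope R_scope.
Lemma eta_pow1 d m : (0 < m < d)%N -> (GRing.exp (Defs.eta d) m != GRing.one CC).
Proof.
move=> /andP [hm hmd]; apply/eqP => H.
rewrite eta_pow in H.
have h1 := congr1 (fun z => complex.Re z) H; have h2 := congr1 (fun z => complex.Im z) H.
simpl in h1, h2.
set x := (INR m * (2 * PI / INR d)) in h1 h2.
have hm' : (0 < INR m) by apply: lt_0_INR; apply/ltP.
have hmd' : (INR m < INR d) by apply: lt_INR; apply/ltP.
have hPI := PI_RGT_0.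
have hx0 : (0 < x).
  rewrite /x; apply: Rmult_lt_0_compat => //; apply: Rdiv_lt_0_compat; lra.
have hx1 : (x < 2 * PI).
  rewrite /x /Rdiv -Rmult_assoc (Rmult_comm (INR m)) Rmult_assoc.
  rewrite -{2}(Rmult_1_r (2 * PI)); apply: Rmult_lt_compat_l; first lra.
  apply/(Rmult_lt_reg_r (INR d)); first lra.
  rewrite Rmult_assoc Rinv_l; lra.
have [k hk] := sin_eq_0_0 x h2.
have hk0 : (0 < IZR k) by nra.
have hk2 : (IZR k < 2) by nra.
have hk1 : k = Z.one.
  apply lt_IZR in hk0; apply lt_IZR in hk2. rewrite /Z.one. apply: Z.le_antisymm; [exact: (proj1 (Z.lt_succ_r k 1) hk2) | exact: (proj2 (Z.le_succ_l 0 k) hk0)].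
rewrite hk hk1 Rmult_1_l cos_PI in h1.
rewrite /GRing.one /= in h1. lra.
Qed.
End S1.

Lemma eta_inj d (j k : 'I_d) : (Defs.eta d ^+ j = Defs.eta d ^+ k :> CC) -> j = k.
Proof.
wlog hjk : j k / (j <= k)%N.
  move=> W H; case: (leqP j k) => h; first exact: W.
  by symmetry; apply: W; [exact: ltnW | done].
move=> H; apply/val_inj/eqP; rewrite eqn_leq hjk /=; rewrite leqNgt; apply/negP => hlt.
have hk : (k = j + (k - j) :> nat)%N by rewrite subnKC // ltnW.
move: H; rewrite hk exprD => H.
have : Defs.eta d ^+ (k - j) == 1.
  apply/eqP; apply: (mulfI (expf_neq0 j (eta_neq0 d))).
  by rewrite mulr1 -H.
apply/negP; apply: eta_pow1.
rewrite subn_gt0 hlt /=.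
apply: (leq_ltn_trans (leq_subr _ _)); exact: ltn_ord.
Qed.

Lemma homog_key d (a : CC) p n m : (0 < d)%N -> homog_deg d a p ->
  a = (n%:R - m%:R) / d%:R -> forall i j, p`_i`_j != 0 -> (2 * (i + j) + m = n)%N.
Proof.
move=> hd hp ha i j /hp H; rewrite ha in H.
have hd0 : (d%:R : CC) != 0 by rewrite pnatr_eq0 -lt0n.
rewrite mulrA in H.
have /(mulIf (invr_neq0 hd0)) H2 := H.
apply/eqP; rewrite -(eqr_nat CC) natrD natrM mulrC H2 subrK eqxx.
by [].
Qed.

Lemma const_of (p : bipoly) : (forall i j, p`_i`_j != 0 -> i = 0%N /\ j = 0%N) ->
  p = (p`_0`_0)%:P%:P.
Proof.
move=> H; apply/polyP => i; apply/polyP => j; rewrite coefC.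
case: (eqVneq (p`_i`_j) 0) => h.
  rewrite h; case: eqP => hi; last by rewrite coef0.
  subst i; rewrite coefC; case: eqP => hj //; subst j; by rewrite h.
by have [-> ->] := H i j h; rewrite coefC eqxx.
Qed.

Lemma zero_of (p : bipoly) : (forall i j, p`_i`_j != 0 -> False) -> p = 0.
Proof.
move=> H; apply/polyP => i; apply/polyP => j; rewrite !coef0.
by case: (eqVneq (p`_i`_j) 0) => // /H.
Qed.

Definition DD d (S : {set 'I_d}) : bipoly :=
  \prod_(j in S) ('X - ((Defs.eta d ^+ j)%:P * 'X)%:P).
Arguments DD {d} S.

Lemma dif1E (d : nat) (S : {set 'I_d}) : dif1 (Phat S) = DD S.
Proof. by rewrite /= /DD; apply: eq_bigr => j _; rewrite /varx /vary polyCM. Qed.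

Lemma DD_monic (d : nat) (S : {set 'I_d}) : DD S \is monic.
Proof. exact: monic_prod_XsubC. Qed.

Lemma DD_neq0 (d : nat) (S : {set 'I_d}) : DD S != 0.
Proof. by apply: monic_neq0; apply: DD_monic. Qed.

Lemma DD_diff d (R S : {set 'I_d}) j : j \in R -> j \notin S -> DD R != DD S.
Proof.
move=> hR hS; apply/eqP => E.
have := congr1 (fun q : bipoly => q.[(Defs.eta d ^+ j)%:P * 'X]) E.
rewrite /DD !horner_prod (bigD1 j hR) /= hornerXsubC subrr mul0r.
move/esym/eqP; apply/negP; apply/prodf_neq0 => k hk.
rewrite hornerXsubC -mulrBl -polyCB mulf_neq0 ?polyX_eq0 // polyC_eq0 subr_eq0.
apply/eqP => /eta_inj hjk; subst k; by rewrite hk in hS.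
Qed.

Lemma homog0 d a : homog_deg d a (0 : bipoly).
Proof. by move=> i j; rewrite !coef0 eqxx. Qed.

Lemma homogC d (c : CC) : homog_deg d 0 (c%:P%:P).
Proof.
move=> i j; rewrite coefC; case: i => [|i] /=; last by rewrite coef0 eqxx.
rewrite coefC; case: j => [|j] /=; last by rewrite eqxx.
by move=> _; rewrite mul0r.
Qed.

From mathcomp Require Import zify.

Theorem lemma3p12 (d : nat) (hd : (2 <= d)%N) (R S : {set 'I_d}) :
  (R = S -> forall f : bipoly * bipoly,
     ZMF d (Phat R) (Phat S) f <-> exists c : CC, f = (c%:P%:P, c%:P%:P)) /\
  (R <> S -> forall f : bipoly * bipoly,
     ZMF d (Phat R) (Phat S) f <-> f = (0, 0)).
Proof.
have hd0 : (0 < d)%N by apply: leq_trans hd.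
have h0 : deg0 (Phat R) - deg0 (Phat S) = (#|S|%:R - #|R|%:R) / d%:R.
  rewrite /=. ring.
have h1 : deg1 (Phat R) - deg1 (Phat S) = (#|R|%:R - #|S|%:R) / d%:R.
  rewrite /=. ring.
split.
- move=> eRS; subst R => f; split.
  + case: f => f0 f1 [H0 H1 E1 _]; rewrite !dif1E /= in E1.
    have k0 := @homog_key d _ _ _ _ hd0 H0 h0; have k1 := @homog_key d _ _ _ _ hd0 H1 h1.
    have c0 : forall i j, f0`_i`_j != 0 -> i = 0%N /\ j = 0%N.
      by move=> i j /k0; lia.
    have c1 : forall i j, f1`_i`_j != 0 -> i = 0%N /\ j = 0%N.
      by move=> i j /k1; lia.
    rewrite (@const_of f0 c0) (@const_of f1 c1) in E1 *.
    rewrite mulrC in E1; have /polyC_inj/polyC_inj E := mulIf (DD_neq0 d S) E1.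
    by exists (f0`_0`_0); rewrite E.
  + move=> [c ->]; split => /=; rewrite ?subrr; try exact: homogC; exact: mulrC.
- move=> nRS f; split.
  + case: f => f0 f1 [H0 H1 E1 _]; rewrite !dif1E /= in E1.
    have k0 := @homog_key d _ _ _ _ hd0 H0 h0; have k1 := @homog_key d _ _ _ _ hd0 H1 h1.

    case: (ltngtP #|R| #|S|) => hc.
    * have e1 : f1 = 0 by apply: zero_of => i j /k1; lia.
      move: E1; rewrite e1 mulr0 => /esym/eqP; rewrite mulf_eq0 (negbTE (DD_neq0 d R)) orbF.
      by move/eqP ->.
    * have e0 : f0 = 0 by apply: zero_of => i j /k0; lia.
      move: E1; rewrite e0 mul0r => /eqP; rewrite mulf_eq0 (negbTE (DD_neq0 d S)) /=.
      by move/eqP ->.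
    * have c0 : forall i j, f0`_i`_j != 0 -> i = 0%N /\ j = 0%N.
        by move=> i j /k0; lia.
      have c1 : forall i j, f1`_i`_j != 0 -> i = 0%N /\ j = 0%N.
        by move=> i j /k1; lia.
      rewrite (@const_of f0 c0) (@const_of f1 c1) in E1 *.
      set a := f0`_0`_0 in E1 *; set b := f1`_0`_0 in E1 *.
      have hab : b = a.
        have := congr1 lead_coef E1.
        rewrite [X in lead_coef X = _]mulrC !lead_coef_Mmonic ?DD_monic // !lead_coefC.
        exact: polyC_inj.
      rewrite hab in E1 *.
      have : a%:P%:P * (DD S - DD R) == 0 by rewrite mulrBr subr_eq0 mulrC E1 mulrC.
      rewrite mulf_eq0 subr_eq0 => /orP [/eqP/polyC_inj/polyC_inj -> //|].
      have : ~~ (R \subset S).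
        apply/negP => sub; apply: nRS; apply/eqP; by rewrite eqEcard sub hc leqnn.
      move/subsetPn => [j jR jS].
      by rewrite eq_sym (negbTE (@DD_diff d R S j jR jS)).
  + move=> -> ; split => /=; rewrite ?mulr0 ?mul0r //; exact: homog0.
Qed.
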